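(* Let $R$ be a commutative ring with $\mathbb{Q}\subseteq R$. Let $\mathcal{E}$ (resp. $\mathcal{F}$) be a finitely generated projective module over a commutative unital $R$-algebra $\mathcal{A}$ (resp. $\mathcal{B}$), with a symmetric, strongly nondegenerate, full inner product $\langle\cdot,\cdot\rangle_{\mathcal{E}}$ (resp. $\langle\cdot,\cdot\rangle_{\mathcal{F}}$). Each is equipped with a metric connection, and $\mathcal{R}^\bullet(\mathcal{E})$, $\mathcal{R}^\bullet(\mathcal{F})$ denote the corresponding Rothstein Poisson algebras. Let $g:\mathcal{A}\to\mathcal{B}$ be an algebra isomorphism. Let $G:\mathcal{E}\to\mathcal{F}$ be an $R$-linear bijection along $g$, i.e. $G(ax)=g(a)G(x)$, which is isometric: $g(\langle x,y\rangle_{\mathcal{E}})=\langle G(x),G(y)\rangle_{\mathcal{F}}$. Then $G$ lifts to a morphism of Poisson algebras $G_*:\mathcal{R}^\bullet(\mathcal{E})\to\mathcal{R}^\bullet(\mathcal{F})$ with $G_*(a)=g(a)$ for all $a\in\mathcal{A}$ and $G_*(x)=G(x)$ for all $x\in\mathcal{E}$.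
   Context: Strongly nondegenerate: the induced map from the module to its dual is an isomorphism. Full: every algebra element is a finite sum $\sum_i\langle x_i,y_i\rangle$. $\operatorname{Der}(\mathcal{A})$: $R$-linear derivations. Metric connection on $\mathcal{E}$: $\nabla:\operatorname{Der}(\mathcal{A})\times\mathcal{E}\to\mathcal{E}$ with $\nabla_{aD}x=a\nabla_Dx$, $\nabla_D(ax)=a\nabla_Dx+D(a)x$, and $D\langle x,y\rangle=\langle\nabla_Dx,y\rangle+\langle x,\nabla_Dy\rangle$. Rothstein algebra: $\mathcal{R}^r(\mathcal{E})=\bigoplus_{2p+k=r}\operatorname{Sym}^p_{\mathcal{A}}\operatorname{Der}(\mathcal{A})\otimes_{\mathcal{A}}\Lambda^k_{\mathcal{A}}\mathcal{E}$, with product $(P\otimes\xi)\wedge(Q\otimes\eta)=(P\vee Q)\otimes(\xi\wedge\eta)$. Its Poisson bracket is the unique graded Poisson bracket of degree $-2$ (graded antisymmetric, graded Leibniz with respect to $\wedge$, graded Jacobi) with: - $\{a,b\}=0=\{a,x\}$; - $\{x,y\}=\langle x,y\rangle$; - $\{D,a\}=-D(a)$; - $\{D,x\}=-\nabla_Dx$; - $\{D,E\}=-[D,E]-r(D,E)$. Here $\langle r(D,E),x\wedge y\rangle=\langle R(D,E)x,y\rangle$ with curvature $R(D,E)=\nabla_D\nabla_E-\nabla_E\nabla_D-\nabla_{[D,E]}$. The pairing on $\Lambda^2$ is $\langle a\wedge b,x\wedge y\rangle=\langle a,x\rangle\langle b,y\rangle-\langle a,y\rangle\langle b,x\rangle$.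 The same construction applies to $\mathcal{F}$ over $\mathcal{B}$. A morphism of Poisson algebras is a homogeneous degree-$0$ map compatible with the products and the brackets. *)

(* Defs.v *)
From mathcomp Require Import all_boot all_algebra.
Set Implicit Arguments. Unset Strict Implicit. Unset Printing Implicit Defensive.
Import GRing.Theory.
Local Open Scope ring_scope.

Section ModuleData.
Variables (R : comNzRingType) (A : comAlgType R) (E : lmodType A).

(* finitely generated projective: a direct summand of some A^n *)
Definition fg_projective : Prop :=
  exists (n : nat) (i : E -> 'rV[A]_n) (p : 'rV[A]_n -> E),
    (forall (a : A) x y, i (a *: x + y) = a *: i x + i y) /\
    (forall (a : A) u v, p (a *: u + v) = a *: p u + p v) /\
    (forall x, p (i x) = x).

Definition Alinear_form (f : E -> A) : Prop :=
  forall (a : A) x y, f (a *: x + y) = a * f x + f y.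

Definition good_inner_product (ip : E -> E -> A) : Prop :=
  (forall y, Alinear_form (fun x => ip x y)) /\
  (forall x, Alinear_form (ip x)) /\
  (forall x y, ip x y = ip y x) /\
  (* strongly nondegenerate: x |-> <x,.> : E -> Hom_A(E,A) is bijective *)
  (forall x x', (forall y, ip x y = ip x' y) -> x = x') /\
  (forall f, Alinear_form f -> exists x, forall y, f y = ip x y) /\
  (forall a : A, exists s : seq (E * E), a = \sum_(q <- s) ip q.1 q.2).

Definition isDer (D : A -> A) : Prop :=
  (forall (r : R) (a b : A), D (r *: a + b) = r *: D a + D b) /\
  (forall a b : A, D (a * b) = D a * b + a * D b).

Definition der_add (D D' : A -> A) : A -> A := fun b => D b + D' b.
Definition der_scale (a : A) (D : A -> A) : A -> A := fun b => a * D b.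
Definition der_lie (D D' : A -> A) : A -> A := fun b => D (D' b) - D' (D b).

Definition metric_connection (ip : E -> E -> A) (nabla : (A -> A) -> E -> E)
  : Prop :=
  (forall D D' x, isDer D -> isDer D' ->
      nabla (der_add D D') x = nabla D x + nabla D' x) /\
  (forall a D x, isDer D -> nabla (der_scale a D) x = a *: nabla D x) /\
  (forall D x y, isDer D -> nabla D (x + y) = nabla D x + nabla D y) /\
  (forall D (a : A) x, isDer D -> nabla D (a *: x) = a *: nabla D x + D a *: x) /\
  (forall D x y, isDer D -> D (ip x y) = ip (nabla D x) y + ip x (nabla D y)).

Definition curvature (nabla : (A -> A) -> E -> E) (D D' : A -> A) (x : E) : E :=
  nabla D (nabla D' x) - nabla D' (nabla D x) - nabla (der_lie D D') x.

(* A graded ring is a ring T together with the predicates hom r       *)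
(* ("homogeneous of degree r").                                       *)

Definition graded_commutative (T : nzRingType) (hom : nat -> T -> Prop) : Prop :=
  (forall r, hom r 0) /\
  (forall r x y, hom r x -> hom r y -> hom r (x - y)) /\
  hom 0%N 1 /\
  (forall r s x y, hom r x -> hom s y -> hom (r + s)%N (x * y)) /\
  (forall r s x y, hom r x -> hom s y -> x * y = (-1) ^+ (r * s) * (y * x)).

Definition direct_sum (T : nzRingType) (hom : nat -> T -> Prop) : Prop :=
  (forall t : T, exists (n : nat) (f : nat -> T),
      (forall i, hom i (f i)) /\ t = \sum_(i < n) f i) /\
  (forall (n : nat) (f : nat -> T), (forall i, hom i (f i)) ->
      \sum_(i < n) f i = 0 -> forall i, (i < n)%N -> f i = 0).

(* maps A -> T^0, E -> T^1, Der(A) -> T^2, compatible with the A-module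
   structures (T is an A-algebra through iA) *)
Definition generator_maps (T : nzRingType) (hom : nat -> T -> Prop)
    (iA : A -> T) (iE : E -> T) (iD : (A -> A) -> T) : Prop :=
  (forall a b, iA (a + b) = iA a + iA b) /\
  (forall a b, iA (a * b) = iA a * iA b) /\
  iA 1 = 1 /\
  (forall a, hom 0%N (iA a)) /\
  (forall x y, iE (x + y) = iE x + iE y) /\
  (forall (a : A) x, iE (a *: x) = iA a * iE x) /\
  (forall x, hom 1%N (iE x)) /\
  (forall D D', isDer D -> isDer D' -> iD (der_add D D') = iD D + iD D') /\
  (forall a D, isDer D -> iD (der_scale a D) = iA a * iD D) /\
  (forall D, isDer D -> hom 2%N (iD D)).

Definition ring_morph (T T' : nzRingType) (phi : T -> T') : Prop :=
  (forall x y, phi (x + y) = phi x + phi y) /\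
  (forall x y, phi (x * y) = phi x * phi y) /\ phi 1 = 1.

(* Universal property: (T, iA, iE, iD) is the free graded-commutative
   A-algebra on E (degree 1) and Der(A) (degree 2), i.e.
   T = Sym_A Der(A) (x)_A Lambda_A E. *)
Definition free_graded_commutative (T : nzRingType)
    (iA : A -> T) (iE : E -> T) (iD : (A -> A) -> T) : Prop :=
  forall (T' : nzRingType) (hom' : nat -> T' -> Prop)
         (iA' : A -> T') (iE' : E -> T') (iD' : (A -> A) -> T'),
    graded_commutative hom' -> generator_maps hom' iA' iE' iD' ->
    exists phi : T -> T',
      ring_morph phi /\
      (forall a, phi (iA a) = iA' a) /\ (forall x, phi (iE x) = iE' x) /\
      (forall D, isDer D -> phi (iD D) = iD' D) /\
      (forall psi : T -> T', ring_morph psi ->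
         (forall a, psi (iA a) = iA' a) -> (forall x, psi (iE x) = iE' x) ->
         (forall D, isDer D -> psi (iD D) = iD' D) ->
         forall t, psi t = phi t).

Definition graded_poisson_bracket (T : nzRingType) (hom : nat -> T -> Prop)
    (br : T -> T -> T) : Prop :=
  (forall x y z, br (x + y) z = br x z + br y z) /\
  (forall x y z, br x (y + z) = br x y + br x z) /\
  (forall r s x y, hom r x -> hom s y ->
      hom (r + s - 2)%N (br x y) /\ ((r + s < 2)%N -> br x y = 0)) /\
  (forall r s x y, hom r x -> hom s y ->
      br x y = - ((-1) ^+ (r * s) * br y x)) /\
  (forall r s x y z, hom r x -> hom s y ->
      br x (y * z) = br x y * z + (-1) ^+ (r * s) * (y * br x z)) /\
  (forall r s x y z, hom r x -> hom s y ->
      br x (br y z) = br (br x y) z + (-1) ^+ (r * s) * br y (br x z)).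

(* the defining values of the Rothstein bracket on generators;
   r(D,D') = sum a_i /\ b_i in Lambda^2 E (realised as sum iE a_i * iE b_i)
   with <r(D,D'), x /\ y> = <R(D,D') x, y>. *)
Definition rothstein_values (T : nzRingType) (ip : E -> E -> A)
    (nabla : (A -> A) -> E -> E)
    (iA : A -> T) (iE : E -> T) (iD : (A -> A) -> T) (br : T -> T -> T) : Prop :=
  (forall a b, br (iA a) (iA b) = 0) /\
  (forall a x, br (iA a) (iE x) = 0) /\
  (forall x y, br (iE x) (iE y) = iA (ip x y)) /\
  (forall D a, isDer D -> br (iD D) (iA a) = - iA (D a)) /\
  (forall D x, isDer D -> br (iD D) (iE x) = - iE (nabla D x)) /\
  (forall D D', isDer D -> isDer D' ->
     exists s : seq (E * E),
       (forall x y, \sum_(q <- s) (ip q.1 x * ip q.2 y - ip q.1 y * ip q.2 x)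
                    = ip (curvature nabla D D' x) y) /\
       br (iD D) (iD D') = - iD (der_lie D D') - \sum_(q <- s) iE q.1 * iE q.2).

Definition is_rothstein_algebra (ip : E -> E -> A) (nabla : (A -> A) -> E -> E)
    (T : nzRingType) (hom : nat -> T -> Prop)
    (iA : A -> T) (iE : E -> T) (iD : (A -> A) -> T) (br : T -> T -> T) : Prop :=
  graded_commutative hom /\ direct_sum hom /\
  generator_maps hom iA iE iD /\ free_graded_commutative iA iE iD /\
  graded_poisson_bracket hom br /\ rothstein_values ip nabla iA iE iD br.

End ModuleData.

Definition poisson_morphism (T T' : nzRingType)
    (hom : nat -> T -> Prop) (hom' : nat -> T' -> Prop)
    (br : T -> T -> T) (br' : T' -> T' -> T') (phi : T -> T') : Prop :=
  ring_morph phi /\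
  (forall r x, hom r x -> hom' r (phi x)) /\
  (forall x y, phi (br x y) = br' (phi x) (phi y)).

(* Main.v *)
From HB Require Import structures.
Require Import Defs.
From mathcomp Require Import all_boot all_algebra.
From mathcomp Require Import boolp.
From mathcomp Require Import ring.
Set Implicit Arguments. Unset Strict Implicit. Unset Printing Implicit Defensive.
Import GRing.Theory.
Local Open Scope ring_scope.


Definition subrP (T : nzRingType) (S : T -> Prop) : {pred T} := fun t => `[< S t >].

Record subrT (T : nzRingType) (S : T -> Prop)
  (HS : subring_closed (subrP S)) := SubrT { subr_val : T; subr_prop : subr_val \in subrP S }.

Section Inst.
Variables (T : nzRingType) (S : T -> Prop) (HS : subring_closed (subrP S)).
HB.instance Definition _ := GRing.isSubringClosed.Build T (subrP S) HS.
HB.instance Definition _ := [isSub for @subr_val T S HS].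
HB.instance Definition _ := [Choice of subrT HS by <:].
HB.instance Definition _ := [SubChoice_isSubNzRing of subrT HS by <:].
End Inst.

Lemma subr_valM (T : nzRingType) (S : T -> Prop) (HS : subring_closed (subrP S)) (x y : subrT HS) :
  subr_val (x * y) = subr_val x * subr_val y.
Proof. by []. Qed.
Lemma subr_valB (T : nzRingType) (S : T -> Prop) (HS : subring_closed (subrP S)) (x y : subrT HS) :
  subr_val (x - y) = subr_val x - subr_val y.
Proof. by []. Qed.
Lemma subr_valD (T : nzRingType) (S : T -> Prop) (HS : subring_closed (subrP S)) (x y : subrT HS) :
  subr_val (x + y) = subr_val x + subr_val y.
Proof. by []. Qed.
Lemma subr_val1 (T : nzRingType) (S : T -> Prop) (HS : subring_closed (subrP S)) :
  subr_val (1 : subrT HS) = 1.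
Proof. by []. Qed.
Lemma subr_val0 (T : nzRingType) (S : T -> Prop) (HS : subring_closed (subrP S)) :
  subr_val (0 : subrT HS) = 0.
Proof. by []. Qed.
Lemma subr_valN (T : nzRingType) (S : T -> Prop) (HS : subring_closed (subrP S)) (x : subrT HS) :
  subr_val (- x) = - subr_val x.
Proof. by []. Qed.
Lemma subr_valX (T : nzRingType) (S : T -> Prop) (HS : subring_closed (subrP S)) (x : subrT HS) n :
  subr_val (x ^+ n) = subr_val x ^+ n.
Proof. elim: n => [|n IH]; first by []. by rewrite !exprS subr_valM IH. Qed.
Lemma subr_inj (T : nzRingType) (S : T -> Prop) (HS : subring_closed (subrP S)) (x y : subrT HS) :
  subr_val x = subr_val y -> x = y.
Proof. exact: val_inj. Qed.

Section Gen.
Variables (R : comNzRingType) (A : comAlgType R) (E : lmodType A).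
Variables (T : nzRingType) (hom : nat -> T -> Prop) (iA : A -> T) (iE : E -> T)
  (iD : (A -> A) -> T).
Hypotheses (Hgc : graded_commutative hom) (Hgm : generator_maps hom iA iE iD)
  (Hfree : free_graded_commutative iA iE iD).
Variable Good : nat -> T -> Prop.
Hypotheses (G1 : Good 0 1) (GN : forall r t, Good r t -> Good r (- t))
  (GM : forall r s t u, Good r t -> Good s u -> Good (r + s)%N (t * u))
  (GA : forall a, Good 0 (iA a)) (GE : forall x, Good 1 (iE x))
  (GD : forall D, isDer D -> Good 2 (iD D)).

Definition Sp (t : T) := exists s : seq (nat * T),
  (forall p, p \in s -> Good p.1 p.2) /\ t = \sum_(p <- s) p.2.

Lemma Sp_closed : subring_closed (subrP Sp).
Proof.
split.
- apply/asboolP; exists [:: (0%N, 1)]; split; last by rewrite big_seq1.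
  by move=> p; rewrite inE => /eqP ->.
- move=> u v /asboolP [s1 [H1 ->]] /asboolP [s2 [H2 ->]]; apply/asboolP.
  exists (s1 ++ [seq (p.1, - p.2) | p <- s2]); split.
  + move=> p; rewrite mem_cat => /orP [/H1 //|/mapP [q /H2 Hq ->]]; exact: GN.
  + by rewrite big_cat big_map /= sumrN.
- move=> u v /asboolP [s1 [H1 ->]] /asboolP [s2 [H2 ->]]; apply/asboolP.
  exists [seq ((p.1 + q.1)%N, p.2 * q.2) | p <- s1, q <- s2]; split.
  + move=> p /allpairsP [[q1 q2] [/= Hq1 Hq2 ->]]; exact: GM (H1 _ Hq1) (H2 _ Hq2).
  + rewrite big_allpairs_dep /= big_distrl /=; apply: eq_bigr => p _.
    by rewrite big_distrr.
Qed.

Local Notation ST := (subrT Sp_closed).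

Definition homS (r : nat) (u : ST) := hom r (subr_val u).

Lemma mem_gen_iA a : iA a \in subrP Sp.
Proof.
apply/asboolP; exists [:: (0%N, iA a)]; split; last by rewrite big_seq1.
by move=> p; rewrite inE => /eqP ->; apply: GA.
Qed.
Lemma mem_gen_iE x : iE x \in subrP Sp.
Proof.
apply/asboolP; exists [:: (1%N, iE x)]; split; last by rewrite big_seq1.
by move=> p; rewrite inE => /eqP ->; apply: GE.
Qed.
Lemma mem_gen_iD D : isDer D -> iD D \in subrP Sp.
Proof.
move=> HD; apply/asboolP; exists [:: (2%N, iD D)]; split; last by rewrite big_seq1.
by move=> p; rewrite inE => /eqP ->; apply: GD.
Qed.

Definition iAS a : ST := SubrT Sp_closed (mem_gen_iA a).
Definition iES x : ST := SubrT Sp_closed (mem_gen_iE x).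
Definition iDS (D : A -> A) : ST :=
  match pselect (isDer D) with
  | left HD => SubrT Sp_closed (mem_gen_iD HD)
  | right _ => 0
  end.

Lemma iDS_val D : isDer D -> subr_val (iDS D) = iD D.
Proof. by rewrite /iDS; case: (pselect (isDer D)). Qed.

Lemma homS_gc : graded_commutative homS.
Proof.
case: Hgc => [h0 [hB [h1 [hM hC]]]].
rewrite /homS; split; first by move=> r; rewrite subr_val0.
split; first by move=> r x y ? ?; rewrite subr_valB; apply: hB.
split; first by rewrite subr_val1.
split; first by move=> r s x y ? ?; rewrite subr_valM; apply: hM.
move=> r s x y Hx Hy; apply: subr_inj.
by rewrite !subr_valM subr_valX subr_valN subr_val1; apply: hC.
Qed.

Lemma genS : generator_maps homS iAS iES iDS.
Proof.
case: Hgm => [gA [gAM [gA1 [hA [gE [gEs [hE [gD [gDs hD]]]]]]]]].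
rewrite /homS; split; first by move=> a b; apply: subr_inj; rewrite subr_valD /= gA.
split; first by move=> a b; apply: subr_inj; rewrite subr_valM /= gAM.
split; first by apply: subr_inj; rewrite subr_val1 /= gA1.
split; first by move=> a; apply: hA.
split; first by move=> x y; apply: subr_inj; rewrite subr_valD /= gE.
split; first by move=> a x; apply: subr_inj; rewrite subr_valM /= gEs.
split; first by move=> x; apply: hE.
have dadd : forall D D' : A -> A, isDer D -> isDer D' -> isDer (der_add D D').
  move=> D D' [l1 m1] [l2 m2]; split.
    by move=> r a b; rewrite /der_add l1 l2 scalerDr addrACA.
  by move=> a b; rewrite /der_add m1 m2 mulrDl mulrDr addrACA.
have dsc : forall (a : A) (D : A -> A), isDer D -> isDer (der_scale a D).
  move=> a D [l1 m1]; split.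
    by move=> r x y; rewrite /der_scale l1 mulrDr scalerAr.
  by move=> x y; rewrite /der_scale m1 mulrDr mulrA; congr (_ + _); rewrite mulrCA.
split; first by move=> D D' H H'; apply: subr_inj; rewrite subr_valD !iDS_val ?gD //; apply: dadd.
split; first by move=> a D H; apply: subr_inj; rewrite subr_valM !iDS_val ?gDs //; apply: dsc.
by move=> D H; rewrite iDS_val //; apply: hD.
Qed.

Lemma generation t : Sp t.
Proof.
case: (Hfree homS_gc genS) => phi [[pD [pM p1]] [pA [pE [pDD _]]]].
case: (Hfree Hgc Hgm) => phi0 [_ [_ [_ [_ uniq]]]].
have e1 : forall t, t = phi0 t.
  by move=> u; apply: (uniq id) => //.
have e2 : forall t, subr_val (phi t) = phi0 t.
  move=> u; apply: (uniq (fun t => subr_val (phi t))).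
  - split; first by move=> x y; rewrite pD subr_valD.
    split; first by move=> x y; rewrite pM subr_valM.
    by rewrite p1 subr_val1.
  - by move=> a; rewrite pA.
  - by move=> x; rewrite pE.
  - by move=> D HD; rewrite pDD // iDS_val.
have := subr_prop (phi t); rewrite e2 -e1 => /asboolP; done.
Qed.

End Gen.


Section Roth.
Variables (R : comNzRingType) (A : comAlgType R) (E : lmodType A).
Variables (ip : E -> E -> A) (nabla : (A -> A) -> E -> E).
Variables (T : nzRingType) (hom : nat -> T -> Prop) (iA : A -> T) (iE : E -> T)
  (iD : (A -> A) -> T) (br : T -> T -> T).
Hypothesis HR : is_rothstein_algebra ip nabla hom iA iE iD br.
Hypothesis Hip : good_inner_product ip.
Hypothesis Hfg : fg_projective E.
Ltac dR := move: HR => [[h0 [hB [h1 [hM hC]]]] [ds [[gA [gAM [gA1 [hA [gE [gEs [hE [gD [gDs hD]]]]]]]]] [fr [[brDl' [brDr' [brdeg' [brC' [brL' brJ']]]]] [vAA' [vAE' [vEE' [vDA' [vDE' vDD']]]]]]]]]].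

Lemma hom0 r : hom r 0. Proof. by dR. Qed.
Lemma homB r x y : hom r x -> hom r y -> hom r (x - y).
Proof. by dR; apply: hB. Qed.
Lemma homN r x : hom r x -> hom r (- x).
Proof. by move=> h; rewrite -sub0r; apply: homB => //; apply: hom0. Qed.
Lemma homD r x y : hom r x -> hom r y -> hom r (x + y).
Proof. by move=> hx hy; rewrite -[y]opprK; apply: homB => //; apply: homN. Qed.
Lemma hom1 : hom 0 1. Proof. by dR. Qed.
Lemma homM r s x y : hom r x -> hom s y -> hom (r + s) (x * y).
Proof. by dR; apply: hM. Qed.
Lemma homC r s x y : hom r x -> hom s y -> x * y = (-1) ^+ (r * s) * (y * x).
Proof. by dR; apply: hC. Qed.
Lemma hom_sum r I (s : seq I) (f : I -> T) :
  (forall i, hom r (f i)) -> hom r (\sum_(i <- s) f i).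
Proof.
move=> H; elim: s => [|i s IH]; first by rewrite big_nil; apply: hom0.
by rewrite big_cons; apply: homD.
Qed.

Lemma dsum : direct_sum hom. Proof. by dR; eauto. Qed.

Lemma iAD a b : iA (a + b) = iA a + iA b. Proof. by dR; eauto. Qed.
Lemma iAM a b : iA (a * b) = iA a * iA b. Proof. by dR; eauto. Qed.
Lemma iA1 : iA 1 = 1. Proof. by dR; eauto. Qed.
Lemma homA a : hom 0 (iA a). Proof. by dR; eauto. Qed.
Lemma iED x y : iE (x + y) = iE x + iE y.
Proof. by dR; eauto. Qed.
Lemma iEZ (a : A) x : iE (a *: x) = iA a * iE x.
Proof. by dR; eauto. Qed.
Lemma homE_gen x : hom 1 (iE x).
Proof. by dR; eauto. Qed.
Lemma iDD D D' : isDer D -> isDer D' -> iD (der_add D D') = iD D + iD D'.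
Proof. by dR; eauto. Qed.
Lemma iDZ a D : isDer D -> iD (der_scale a D) = iA a * iD D.
Proof. by dR; eauto. Qed.
Lemma homDD D : isDer D -> hom 2 (iD D).
Proof. by dR; eauto. Qed.
Lemma gcT : graded_commutative hom. Proof. by case: HR. Qed.
Lemma gmT : generator_maps hom iA iE iD. Proof. by dR; eauto. Qed.
Lemma freeT : free_graded_commutative iA iE iD. Proof. by dR; eauto. Qed.

Lemma iA0 : iA 0 = 0.
Proof. by apply: (@addrI _ (iA 0)); rewrite -iAD !addr0. Qed.
Lemma iAN a : iA (- a) = - iA a.
Proof. by apply/eqP; rewrite -addr_eq0 -iAD addNr iA0. Qed.
Lemma iE0 : iE 0 = 0.
Proof. by apply: (@addrI _ (iE 0)); rewrite -iED !addr0. Qed.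
Lemma iEN x : iE (- x) = - iE x.
Proof. by apply/eqP; rewrite -addr_eq0 -iED addNr iE0. Qed.
Lemma iEB x y : iE (x - y) = iE x - iE y.
Proof. by rewrite iED iEN. Qed.
Lemma iE_sum I (s : seq I) (f : I -> E) : iE (\sum_(i <- s) f i) = \sum_(i <- s) iE (f i).
Proof. elim: s => [|i s IH]; by rewrite ?big_nil ?iE0 // !big_cons iED IH. Qed.
Lemma iA_sum I (s : seq I) (f : I -> A) : iA (\sum_(i <- s) f i) = \sum_(i <- s) iA (f i).
Proof. elim: s => [|i s IH]; by rewrite ?big_nil ?iA0 // !big_cons iAD IH. Qed.

Lemma comm0 s x y : hom 0 x -> hom s y -> x * y = y * x.
Proof. by move=> hx hy; rewrite (homC hx hy) mul0n expr0 mul1r. Qed.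
Lemma iAC a y s : hom s y -> iA a * y = y * iA a.
Proof. by move=> h; apply: (comm0 (homA a) h). Qed.

Lemma sgn2 n : (-1) ^+ (2 * n) = 1 :> T.
Proof. by rewrite exprM sqrrN expr1n expr1n. Qed.
Lemma sgn11 : (-1) ^+ (1 * 1) = -1 :> T.
Proof. by rewrite expr1. Qed.
Lemma EEC x y : iE x * iE y = - (iE y * iE x).
Proof. by rewrite (homC (homE_gen x) (homE_gen y)) sgn11 mulN1r. Qed.

Lemma brDl x y z : br (x + y) z = br x z + br y z.
Proof. by dR; eauto. Qed.
Lemma brDr x y z : br x (y + z) = br x y + br x z.
Proof. by dR; eauto. Qed.
Lemma brdeg r s x y : hom r x -> hom s y ->
  hom (r + s - 2) (br x y) /\ ((r + s < 2)%N -> br x y = 0).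
Proof. by dR; eauto. Qed.
Lemma brC r s x y : hom r x -> hom s y -> br x y = - ((-1) ^+ (r * s) * br y x).
Proof. by dR; eauto. Qed.
Lemma brL r s x y z : hom r x -> hom s y ->
  br x (y * z) = br x y * z + (-1) ^+ (r * s) * (y * br x z).
Proof. by dR; eauto. Qed.
Lemma brJ r s x y z : hom r x -> hom s y ->
  br x (br y z) = br (br x y) z + (-1) ^+ (r * s) * br y (br x z).
Proof. by dR; eauto. Qed.

Lemma br0l y : br 0 y = 0.
Proof. by apply: (@addrI _ (br 0 y)); rewrite -brDl !addr0. Qed.
Lemma br0r y : br y 0 = 0.
Proof. by apply: (@addrI _ (br y 0)); rewrite -brDr !addr0. Qed.
Lemma brNl x y : br (- x) y = - br x y.
Proof. by apply/eqP; rewrite -addr_eq0 -brDl addNr br0l. Qed.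
Lemma brNr x y : br x (- y) = - br x y.
Proof. by apply/eqP; rewrite -addr_eq0 -brDr addNr br0r. Qed.
Lemma brBl x y z : br (x - y) z = br x z - br y z.
Proof. by rewrite brDl brNl. Qed.
Lemma brBr x y z : br z (x - y) = br z x - br z y.
Proof. by rewrite brDr brNr. Qed.
Lemma br_suml I (s : seq I) (f : I -> T) y :
  br (\sum_(i <- s) f i) y = \sum_(i <- s) br (f i) y.
Proof. elim: s => [|i s IH]; by rewrite ?big_nil ?br0l // !big_cons brDl IH. Qed.
Lemma br_sumr I (s : seq I) (f : I -> T) y :
  br y (\sum_(i <- s) f i) = \sum_(i <- s) br y (f i).
Proof. elim: s => [|i s IH]; by rewrite ?big_nil ?br0r // !big_cons brDr IH. Qed.

Lemma br1 r x : hom r x -> br x 1 = 0.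
Proof.
move=> hx; have := brL 1 hx hom1; rewrite mulr1 muln0 expr0 !mul1r.
by rewrite mulr1 => h; apply: (@addrI _ (br x 1)); rewrite addr0 -h.
Qed.

Lemma vAA a b : br (iA a) (iA b) = 0. Proof. by dR; eauto. Qed.
Lemma vAE a x : br (iA a) (iE x) = 0. Proof. by dR; eauto. Qed.
Lemma vEE x y : br (iE x) (iE y) = iA (ip x y).
Proof. by dR; eauto. Qed.
Lemma vDA D a : isDer D -> br (iD D) (iA a) = - iA (D a).
Proof. by dR; eauto. Qed.
Lemma vDE D x : isDer D -> br (iD D) (iE x) = - iE (nabla D x).
Proof. by dR; eauto. Qed.
Lemma vDD D D' : isDer D -> isDer D' ->
     exists s : seq (E * E),
       (forall x y, \sum_(q <- s) (ip q.1 x * ip q.2 y - ip q.1 y * ip q.2 x)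
                    = ip (curvature nabla D D' x) y) /\
       br (iD D) (iD D') = - iD (der_lie D D') - \sum_(q <- s) iE q.1 * iE q.2.
Proof. by dR; eauto. Qed.


Lemma ipC x y : ip x y = ip y x.
Proof. by case: Hip => [_ [_ [H _]]]. Qed.
Lemma ipl a x x' y : ip (a *: x + x') y = a * ip x y + ip x' y.
Proof. by case: Hip => [H _]; apply: (H y). Qed.
Lemma ipDl x x' y : ip (x + x') y = ip x y + ip x' y.
Proof. by rewrite -[x]scale1r ipl mul1r scale1r. Qed.
Lemma ip0l y : ip 0 y = 0.
Proof. by apply: (@addrI _ (ip 0 y)); rewrite -ipDl !addr0. Qed.
Lemma ipZl a x y : ip (a *: x) y = a * ip x y.
Proof. by rewrite -[a *: x]addr0 ipl ip0l addr0. Qed.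
Lemma ipNl x y : ip (- x) y = - ip x y.
Proof. by rewrite -scaleN1r ipZl mulN1r. Qed.
Lemma ipBl x x' y : ip (x - x') y = ip x y - ip x' y.
Proof. by rewrite ipDl ipNl. Qed.
Lemma ip_suml I (s : seq I) (f : I -> E) y :
  ip (\sum_(i <- s) f i) y = \sum_(i <- s) ip (f i) y.
Proof. elim: s => [|i s IH]; by rewrite ?big_nil ?ip0l // !big_cons ipDl IH. Qed.
Lemma ipDr x y y' : ip x (y + y') = ip x y + ip x y'.
Proof. by rewrite ipC ipDl ![ip _ x]ipC. Qed.
Lemma ipZr a x y : ip x (a *: y) = a * ip x y.
Proof. by rewrite ipC ipZl ipC. Qed.
Lemma ipNr x y : ip x (- y) = - ip x y.
Proof. by rewrite ipC ipNl ipC. Qed.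
Lemma ip_sumr I (s : seq I) (f : I -> E) y :
  ip y (\sum_(i <- s) f i) = \sum_(i <- s) ip y (f i).
Proof. by rewrite ipC ip_suml; apply: eq_bigr => i _; rewrite ipC. Qed.
Lemma ip_inj x x' : (forall y, ip x y = ip x' y) -> x = x'.
Proof. by case: Hip => [_ [_ [_ [H _]]]]; apply: H. Qed.

Lemma frame_exists : exists fr : seq (E * E),
  (forall y, y = \sum_(k <- fr) ip k.2 y *: k.1) /\
  (forall w, w = \sum_(k <- fr) ip k.1 w *: k.2).
Proof.
case: Hfg => n [i [p [li [lp pi]]]].
have p0 : p 0 = 0.
  have := lp 1 0 0; rewrite scale1r !addr0 scale1r => h.
  by apply: (@addrI _ (p 0)); rewrite addr0 -h.
have pD : forall u v, p (u + v) = p u + p v.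
  by move=> u v; rewrite -{1}[u]scale1r lp scale1r.
have pZ : forall (a : A) u, p (a *: u) = a *: p u.
  by move=> a u; rewrite -[a *: u]addr0 lp p0 addr0.
have psum : forall (I : Type) (s : seq I) (f : I -> 'rV_n), p (\sum_(j <- s) f j) = \sum_(j <- s) p (f j).
  by move=> I s f; elim: s => [|j s IH]; rewrite ?big_nil ?p0 // !big_cons pD IH.
have lin : forall k : 'I_n, Alinear_form (fun y => i y 0 k).
  by move=> k a x y /=; rewrite li !mxE.
have fk : forall k : 'I_n, {f : E | forall y, i y 0 k = ip f y}.
  move=> k; apply: cid; case: Hip => [_ [_ [_ [_ [H _]]]]]; exact: H (lin k).
pose fr := [seq (p (delta_mx 0 k), sval (fk k)) | k <- enum 'I_n].
have F1 : forall y, y = \sum_(k <- fr) ip k.2 y *: k.1.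
  move=> y; rewrite big_map -{1}(pi y) {1}(row_sum_delta (i y)).
  rewrite psum big_enum /=; apply: eq_big => [k|k _] //.
  by rewrite pZ (svalP (fk k)).
exists fr; split => //.
move=> w; apply: (ip_inj (x := w)) => z.
rewrite ip_suml {1}(F1 z) ip_sumr; apply: eq_bigr => k _.
by rewrite ipZr ipZl mulrC ipC.
Qed.


Lemma homEE x y : hom 2 (iE x * iE y).
Proof. exact: (homM (homE_gen x) (homE_gen y)). Qed.

Lemma contractEE a b y :
  br (iE a * iE b) (iE y) = iE (ip b y *: a - ip a y *: b).
Proof.
rewrite (brC (homEE a b) (homE_gen y)) sgn2 mul1r.
rewrite (brL _ (homE_gen y) (homE_gen a)) sgn11 !vEE mulN1r opprD opprK.
rewrite iEB !iEZ (iAC _ (homE_gen a)) addrC [ip b y]ipC [ip a y]ipC.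
by [].
Qed.

Definition lf (s : seq (E * E)) := \sum_(q <- s) iE q.1 * iE q.2.
Definition Lc (s : seq (E * E)) y := \sum_(q <- s) (ip q.2 y *: q.1 - ip q.1 y *: q.2).

Lemma homlf s : hom 2 (lf s).
Proof. by apply: hom_sum => q; apply: homEE. Qed.

Lemma contract_lf s y : br (lf s) (iE y) = iE (Lc s y).
Proof.
rewrite /lf /Lc br_suml iE_sum; apply: eq_bigr => q _; exact: contractEE.
Qed.

Lemma EZE c x f : iE (c *: x) * iE f = iE x * iE (c *: f).
Proof. by rewrite !iEZ (iAC _ (homE_gen x)) mulrA. Qed.

Lemma EZE_sum I (r : seq I) (c : I -> A) (f : I -> E) x :
  \sum_(k <- r) iE (c k *: x) * iE (f k) = iE x * iE (\sum_(k <- r) c k *: f k).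
Proof.
rewrite iE_sum mulr_sumr; apply: eq_bigr => k _; exact: EZE.
Qed.

Lemma two_lf (fr : seq (E * E)) (F2 : forall w, w = \sum_(k <- fr) ip k.1 w *: k.2) s :
  lf s *+ 2 = \sum_(k <- fr) br (lf s) (iE k.1) * iE k.2.
Proof.
under eq_bigr => k _ do rewrite contract_lf /Lc iE_sum mulr_suml.
rewrite exchange_big /= /lf -sumrMnl; apply: eq_bigr => q _.
under eq_bigr => k _ do rewrite iEB mulrBl.
rewrite sumrB !EZE_sum.
have e : forall x, \sum_(k <- fr) ip x k.1 *: k.2 = x.
  by move=> x; rewrite {2}(F2 x); apply: eq_bigr => k _; rewrite ipC.
by rewrite !e [iE q.2 * _]EEC opprK mulr2n.
Qed.

Lemma lf_zero (fr : seq (E * E)) (F2 : forall w, w = \sum_(k <- fr) ip k.1 w *: k.2)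
  (h : A) (h2 : h + h = 1) s :
  (forall y, br (lf s) (iE y) = 0) -> lf s = 0.
Proof.
move=> H; have := two_lf F2 s.
under eq_bigr => k _ do rewrite H mul0r.
rewrite big1_eq => e.
by rewrite -[lf s]mul1r -iA1 -h2 iAD mulrDl -mulrDr -mulr2n e mulr0.
Qed.

Lemma lf_omega (fr : seq (E * E)) (F1 : forall y, y = \sum_(k <- fr) ip k.2 y *: k.1)
  (F2 : forall w, w = \sum_(k <- fr) ip k.1 w *: k.2)
  (h : A) (h2 : h + h = 1) (L : E -> E)
  (Ll : forall a x y, L (a *: x + y) = a *: L x + L y)
  (Ls : forall x y, ip (L x) y = - ip x (L y)) y :
  br (lf [seq (h *: L k.1, k.2) | k <- fr]) (iE y) = iE (L y).
Proof.
have L0 : L 0 = 0.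
  have := Ll 1 0 0; rewrite scale1r !addr0 scale1r => e.
  by apply: (@addrI _ (L 0)); rewrite addr0 -e.
have LZ : forall a x, L (a *: x) = a *: L x.
  by move=> a x; rewrite -[a *: x]addr0 Ll L0 addr0.
have LD : forall x x', L (x + x') = L x + L x'.
  by move=> x x'; rewrite -[x]scale1r Ll !scale1r.
have Lsum : forall I (r : seq I) (f : I -> E), L (\sum_(i <- r) f i) = \sum_(i <- r) L (f i).
  by move=> I r f; elim: r => [|i r IH]; rewrite ?big_nil ?L0 // !big_cons LD IH.
rewrite contract_lf /Lc big_map /= sumrB.
have e1 : \sum_(k <- fr) ip k.2 y *: (h *: L k.1) = h *: L y.
  rewrite {2}(F1 y) Lsum scaler_sumr; apply: eq_bigr => k _.
  by rewrite LZ !scalerA mulrC.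
have e2 : \sum_(k <- fr) ip (h *: L k.1) y *: k.2 = - (h *: L y).
  rewrite {1}(F2 (L y)) scaler_sumr -sumrN; apply: eq_bigr => k _.
  by rewrite ipZl Ls scalerA mulrN scaleNr.
by rewrite e1 e2 opprK -scalerDl h2 scale1r.
Qed.

Definition isLF W := exists s, W = lf s.

Lemma isLF0 : isLF 0. Proof. by exists [::]; rewrite /lf big_nil. Qed.
Lemma isLFD W W' : isLF W -> isLF W' -> isLF (W + W').
Proof. by move=> [s ->] [s' ->]; exists (s ++ s'); rewrite /lf big_cat. Qed.
Lemma isLFN W : isLF W -> isLF (- W).
Proof.
move=> [s ->]; exists [seq (- q.1, q.2) | q <- s].
by rewrite /lf big_map -sumrN; apply: eq_bigr => q _; rewrite iEN mulNr.
Qed.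
Lemma isLFB W W' : isLF W -> isLF W' -> isLF (W - W').
Proof. by move=> h h'; apply: isLFD => //; apply: isLFN. Qed.
Lemma isLF_EE u v : isLF (iE u * iE v).
Proof. by exists [:: (u, v)]; rewrite /lf big_seq1. Qed.
Lemma isLF_sum I (r : seq I) (f : I -> T) :
  (forall i, isLF (f i)) -> isLF (\sum_(i <- r) f i).
Proof.
move=> H; elim: r => [|i r IH]; first by rewrite big_nil; apply: isLF0.
by rewrite big_cons; apply: isLFD.
Qed.
Lemma homLF W : isLF W -> hom 2 W.
Proof. by move=> [s ->]; apply: homlf. Qed.

Lemma isLF_DW D W : isDer D -> isLF W -> isLF (br (iD D) W).
Proof.
move=> HD [s ->]; rewrite /lf br_sumr; apply: isLF_sum => q.
rewrite (brL _ (homDD HD) (homE_gen _)) sgn2 mul1r !vDE //.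
rewrite -!iEN; apply: isLFD; apply: isLF_EE.
Qed.

Lemma isLF_WD D W : isDer D -> isLF W -> isLF (br W (iD D)).
Proof.
move=> HD hW; rewrite (brC (homLF hW) (homDD HD)) sgn2 mul1r.
by apply: isLFN; apply: isLF_DW.
Qed.

Lemma isLF_WW W W' : isLF W -> isLF W' -> isLF (br W W').
Proof.
move=> [s ->] [s' ->]; rewrite {2}/lf br_sumr; apply: isLF_sum => q.
rewrite (brL _ (homlf s) (homE_gen _)) sgn2 mul1r !contract_lf.
apply: isLFD; apply: isLF_EE.
Qed.

Lemma br_DW D D' W W' : isDer D -> isDer D' -> isLF W -> isLF W' ->
  exists V, isLF V /\ br (iD D + W) (iD D' + W') = - iD (der_lie D D') + V.
Proof.
move=> HD HD' hW hW'.
case: (vDD HD HD') => s [_ e].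
exists (- lf s + br (iD D) W' + br W (iD D') + br W W'); split.
  apply: isLFD; last exact: isLF_WW.
  apply: isLFD; last exact: isLF_WD.
  apply: isLFD; last exact: isLF_DW.
  by apply: isLFN; exists s.
rewrite brDl !brDr e /lf.
by rewrite !addrA.
Qed.


Lemma hom_sum_seq r (I : eqType) (s : seq I) (f : I -> T) (P : pred I) :
  (forall i, i \in s -> P i -> hom r (f i)) -> hom r (\sum_(i <- s | P i) f i).
Proof.
elim: s => [|i s IH] H; first by rewrite big_nil; apply: hom0.
have IH' : hom r (\sum_(j <- s | P j) f j).
  by apply: IH => j js; apply: H; rewrite inE js orbT.
rewrite big_cons; case: ifP => // Pi; apply: homD => //.
by apply: H => //; rewrite mem_head.
Qed.

Lemma decomp_hom r y (s : seq (nat * T)) : hom r y ->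
  (forall p, p \in s -> hom p.1 p.2) -> y = \sum_(p <- s) p.2 ->
  y = \sum_(p <- s | p.1 == r) p.2.
Proof.
move=> hy hs ey.
pose N := (maxn r (\max_(q <- s) q.1)).+1.
have hN : forall p, p \in s -> (p.1 < N)%N.
  move=> p ps; rewrite ltnS (leq_trans _ (leq_maxr _ _)) //.
  by have := @leq_bigmax_seq _ s xpredT (fun q : nat * T => q.1) p ps isT.
have rN : (r < N)%N by rewrite ltnS leq_maxl.
pose f (i : nat) := \sum_(p <- s | p.1 == i) p.2 - (if i == r then y else 0).
have hf : forall i, hom i (f i).
  move=> i; apply: homB.
    by apply: hom_sum_seq => p ps /eqP <-; apply: hs.
  by case: eqP => [->|_] //; apply: hom0.
have sf : \sum_(i < N) f i = 0.
  rewrite /f sumrB.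
  have e1 : \sum_(i < N) \sum_(p <- s | p.1 == i) p.2 = \sum_(p <- s) p.2.
    under eq_bigr => i _ do rewrite big_mkcond.
    rewrite exchange_big /= big_seq [RHS]big_seq; apply: eq_bigr => p ps.
    rewrite -(big_mkcond (fun i : 'I_N => p.1 == i)).
    under eq_bigl => i do rewrite eq_sym.
    by rewrite (big_ord1_eq _ (fun _ => p.2)) hN.
  have e2 : \sum_(i < N) (if i == r :> nat then y else 0) = y.
    by rewrite -big_mkcond big_ord1_eq rN.
  by rewrite e1 e2 -ey subrr.
case: dsum => _ uniq.
have := uniq N f hf sf r rN; rewrite /f eqxx => /eqP; rewrite subr_eq0 => /eqP.
by move=> ->.
Qed.


Lemma br_A_lf a s : br (lf s) (iA a) = 0.
Proof.
rewrite (brC (homlf s) (homA a)) muln0 expr0 mul1r /lf br_sumr big1 ?oppr0 //.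
move=> q _; rewrite (brL _ (homA a) (homE_gen _)) !vAE mul0r mulr0. by rewrite mulr0 addr0.
Qed.

End Roth.

Section Der.
Variables (R : comNzRingType) (A : comAlgType R).
Lemma derD (D : A -> A) x y : isDer D -> D (x + y) = D x + D y.
Proof. by case => l _; rewrite -[x]scale1r l !scale1r. Qed.
Lemma der0 (D : A -> A) : isDer D -> D 0 = 0.
Proof.
move=> HD; apply: (@addrI _ (D 0)); rewrite -(derD _ _ HD) !addr0 //.
Qed.
Lemma derN (D : A -> A) x : isDer D -> D (- x) = - D x.
Proof. by move=> HD; apply/eqP; rewrite -addr_eq0 -(derD _ _ HD) addNr der0. Qed.
Lemma derB (D : A -> A) x y : isDer D -> D (x - y) = D x - D y.
Proof. by move=> HD; rewrite derD // derN. Qed.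
Lemma derZ (D : A -> A) (r : R) x : isDer D -> D (r *: x) = r *: D x.
Proof. by move=> HD; case: (HD) => l _; rewrite -[r *: x]addr0 l (der0 HD) addr0. Qed.
Lemma derM (D : A -> A) x y : isDer D -> D (x * y) = D x * y + x * D y.
Proof. by case. Qed.

Lemma der_addP (D D' : A -> A) : isDer D -> isDer D' -> isDer (der_add D D').
Proof.
move=> [l1 m1] [l2 m2]; split.
  by move=> r a b; rewrite /der_add l1 l2 scalerDr addrACA.
by move=> a b; rewrite /der_add m1 m2 mulrDl mulrDr addrACA.
Qed.
Lemma der_scaleP (a : A) (D : A -> A) : isDer D -> isDer (der_scale a D).
Proof.
move=> [l1 m1]; split.
  by move=> r x y; rewrite /der_scale l1 mulrDr scalerAr.
by move=> x y; rewrite /der_scale m1 mulrDr mulrA; congr (_ + _); rewrite mulrCA.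
Qed.
Lemma der_lieP (D D' : A -> A) : isDer D -> isDer D' -> isDer (der_lie D D').
Proof.
move=> HD HD'; case: (HD) => lD mD; case: (HD') => lD' mD'; split.
  move=> r a b; rewrite /der_lie lD' lD lD lD' scalerBr.
  by rewrite addrACA opprD.
move=> a b; rewrite /der_lie mD' (derD _ _ HD) !mD (derD _ _ HD') !mD'.
ring.
Qed.
End Der.


Section Main.
Variables (R : comNzRingType) (A B : comAlgType R) (E : lmodType A) (F : lmodType B)
  (ipE : E -> E -> A) (ipF : F -> F -> B)
  (nablaE : (A -> A) -> E -> E) (nablaF : (B -> B) -> F -> F)
  (TE TF : nzRingType)
  (homE : nat -> TE -> Prop) (homF : nat -> TF -> Prop)
  (iAE : A -> TE) (iEE : E -> TE) (iDE : (A -> A) -> TE) (brE : TE -> TE -> TE)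
  (iAF : B -> TF) (iEF : F -> TF) (iDF : (B -> B) -> TF) (brF : TF -> TF -> TF)
  (g : A -> B) (G : E -> F).
Hypotheses (hQ : forall n : nat, exists u : R, u * (n.+1)%:R = 1)
  (HfE : fg_projective E) (HfF : fg_projective F)
  (HipE : good_inner_product ipE) (HipF : good_inner_product ipF)
  (HcE : metric_connection ipE nablaE) (HcF : metric_connection ipF nablaF)
  (HRE : is_rothstein_algebra ipE nablaE homE iAE iEE iDE brE)
  (HRF : is_rothstein_algebra ipF nablaF homF iAF iEF iDF brF)
  (gD : forall a b, g (a + b) = g a + g b)
  (gM : forall a b, g (a * b) = g a * g b)
  (g1 : g 1 = 1)
  (gZ : forall (r : R) a, g (r *: a) = r *: g a)
  (gbij : bijective g)
  (GD : forall x y, G (x + y) = G x + G y)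
  (GZ : forall (a : A) x, G (a *: x) = g a *: G x)
  (Gbij : bijective G)
  (Giso : forall x y, g (ipE x y) = ipF (G x) (G y)).


Lemma gbij' : exists f, cancel g f /\ cancel f g.
Proof. by case: gbij => f h1 h2; exists f. Qed.
Lemma Gbij' : exists f, cancel G f /\ cancel f G.
Proof. by case: Gbij => f h1 h2; exists f. Qed.
Definition gi := sval (cid gbij').
Definition Gi := sval (cid Gbij').
Lemma gK : cancel g gi. Proof. exact: (svalP (cid gbij')).1. Qed.
Lemma giK : cancel gi g. Proof. exact: (svalP (cid gbij')).2. Qed.
Lemma GK : cancel G Gi. Proof. exact: (svalP (cid Gbij')).1. Qed.
Lemma GiK : cancel Gi G. Proof. exact: (svalP (cid Gbij')).2. Qed.

Lemma g0 : g 0 = 0.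
Proof. by apply: (@addrI _ (g 0)); rewrite -gD !addr0. Qed.
Lemma gN a : g (- a) = - g a.
Proof. by apply/eqP; rewrite -addr_eq0 -gD addNr g0. Qed.
Lemma gB a b : g (a - b) = g a - g b.
Proof. by rewrite gD gN. Qed.
Lemma giD a b : gi (a + b) = gi a + gi b.
Proof. by apply: (can_inj gK); rewrite gD !giK. Qed.
Lemma giM a b : gi (a * b) = gi a * gi b.
Proof. by apply: (can_inj gK); rewrite gM !giK. Qed.
Lemma giZ (r : R) a : gi (r *: a) = r *: gi a.
Proof. by apply: (can_inj gK); rewrite gZ !giK. Qed.
Lemma G0 : G 0 = 0.
Proof. by apply: (@addrI _ (G 0)); rewrite -GD !addr0. Qed.
Lemma GN x : G (- x) = - G x.
Proof. by apply/eqP; rewrite -addr_eq0 -GD addNr G0. Qed.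
Lemma GB x y : G (x - y) = G x - G y.
Proof. by rewrite GD GN. Qed.
Lemma GiD x y : Gi (x + y) = Gi x + Gi y.
Proof. by apply: (can_inj GK); rewrite GD !GiK. Qed.
Lemma GiZ (b : B) y : Gi (b *: y) = gi b *: Gi y.
Proof. by apply: (can_inj GK); rewrite GZ !GiK giK. Qed.
Lemma Giiso x y : gi (ipF x y) = ipE (Gi x) (Gi y).
Proof. by apply: (can_inj gK); rewrite giK Giso !GiK. Qed.

Definition tD (D : A -> A) : B -> B := fun b => g (D (gi b)).
Lemma tDP D : isDer D -> isDer (tD D).
Proof.
move=> HD; split.
  by move=> r a b; rewrite /tD giD giZ (derD _ _ HD) (derZ _ _ HD) gD gZ.
by move=> a b; rewrite /tD giM (derM _ _ HD) gD !gM !giK.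
Qed.
Lemma tD_add D D' : tD (der_add D D') = der_add (tD D) (tD D').
Proof. by apply: funext => b; rewrite /tD /der_add gD. Qed.
Lemma tD_scale a D : tD (der_scale a D) = der_scale (g a) (tD D).
Proof. by apply: funext => b; rewrite /tD /der_scale gM. Qed.
Lemma tD_lie D D' : tD (der_lie D D') = der_lie (tD D) (tD D').
Proof. by apply: funext => b; rewrite /tD /der_lie gB !gK. Qed.

Lemma cDD (T : comAlgType R) (M : lmodType T) ip (nabla : (T -> T) -> M -> M) :
  metric_connection ip nabla -> forall D D' x, isDer D -> isDer D' ->
      nabla (der_add D D') x = nabla D x + nabla D' x.
Proof. by case. Qed.
Lemma cSc (T : comAlgType R) (M : lmodType T) ip (nabla : (T -> T) -> M -> M) :
  metric_connection ip nabla -> forall a D x, isDer D -> nabla (der_scale a D) x = a *: nabla D x.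
Proof. by case => _ []. Qed.
Lemma cAdd (T : comAlgType R) (M : lmodType T) ip (nabla : (T -> T) -> M -> M) :
  metric_connection ip nabla -> forall D x y, isDer D -> nabla D (x + y) = nabla D x + nabla D y.
Proof. by case => _ [_ []]. Qed.
Lemma cLeib (T : comAlgType R) (M : lmodType T) ip (nabla : (T -> T) -> M -> M) :
  metric_connection ip nabla -> forall D (a : T) x, isDer D -> nabla D (a *: x) = a *: nabla D x + D a *: x.
Proof. by case => _ [_ [_ []]]. Qed.
Lemma cMet (T : comAlgType R) (M : lmodType T) ip (nabla : (T -> T) -> M -> M) :
  metric_connection ip nabla -> forall D x y, isDer D -> D (ip x y) = ip (nabla D x) y + ip x (nabla D y).
Proof. by case => _ [_ [_ []]]. Qed.

Definition Dl (D : A -> A) (y : F) : F := nablaF (tD D) y - G (nablaE D (Gi y)).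

Lemma zA (V : zmodType) (p q r u w : V) : p + q + r - (u + q + w) = p - u + (r - w).
Proof. by rewrite (addrAC p) (addrAC u) (addrC (u + w) q) addrKA opprD addrACA. Qed.

Lemma Dl_lin D : isDer D -> forall (b : B) x y, Dl D (b *: x + y) = b *: Dl D x + Dl D y.
Proof.
move=> HD b x y; have HtD := tDP HD.
rewrite /Dl (cAdd HcF _ _ HtD) (cLeib HcF _ _ HtD) GiD GiZ (cAdd HcE _ _ HD) (cLeib HcE _ _ HD).
by rewrite !GD !GZ GiK giK /tD scalerBr zA.
Qed.

Lemma Dl_skew D : isDer D -> forall x y, ipF (Dl D x) y = - ipF x (Dl D y).
Proof.
move=> HD x y; have HtD := tDP HD.
have e := cMet HcF x y HtD.
rewrite {1}/tD Giiso (cMet HcE _ _ HD) gD !Giso !GiK in e.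
rewrite /Dl (ipBl HipF) (ipDr HipF) (ipNr HipF).
set P1 := ipF (nablaF (tD D) x) y in e *.
have -> : P1 = ipF (G (nablaE D (Gi x))) y + ipF x (G (nablaE D (Gi y))) - ipF x (nablaF (tD D) y).
  by rewrite e addrK.
ring.
Qed.

Lemma Dl_add D D' : isDer D -> isDer D' -> forall y, Dl (der_add D D') y = Dl D y + Dl D' y.
Proof.
move=> HD HD' y; rewrite /Dl tD_add (cDD HcF _ (tDP HD) (tDP HD')) (cDD HcE _ HD HD').
by rewrite GD opprD addrACA.
Qed.

Lemma Dl_scale a D : isDer D -> forall y, Dl (der_scale a D) y = g a *: Dl D y.
Proof.
move=> HD y; rewrite /Dl tD_scale (cSc HcF _ _ (tDP HD)) (cSc HcE _ _ HD).
by rewrite GZ scalerBr.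
Qed.

Lemma half_ex : exists h : B, h + h = 1.
Proof.
case: (hQ 1) => u hu; exists (u%:A).
have e : u + u = 1 by rewrite -hu mulr_natr mulr2n.
by rewrite -scalerDl e scale1r.
Qed.


Definition hh := sval (cid half_ex).
Lemma hh2 : hh + hh = 1. Proof. exact: svalP (cid half_ex). Qed.
Definition fr := sval (cid (frame_exists HipF HfF)).
Lemma fr1 : forall y, y = \sum_(k <- fr) ipF k.2 y *: k.1.
Proof. exact: (svalP (cid (frame_exists HipF HfF))).1. Qed.
Lemma fr2 : forall w, w = \sum_(k <- fr) ipF k.1 w *: k.2.
Proof. exact: (svalP (cid (frame_exists HipF HfF))).2. Qed.

Definition omega (D : A -> A) : TF := lf iEF [seq (hh *: Dl D k.1, k.2) | k <- fr].

Lemma omegaLF D : isLF iEF (omega D).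
Proof. by exists [seq (hh *: Dl D k.1, k.2) | k <- fr]. Qed.

Lemma omega_contract D y : isDer D -> brF (omega D) (iEF y) = iEF (Dl D y).
Proof.
move=> HD; exact: (lf_omega HRF HipF fr1 fr2 hh2 (Dl_lin HD) (Dl_skew HD)).
Qed.

Lemma omega_add D D' : isDer D -> isDer D' -> omega (der_add D D') = omega D + omega D'.
Proof.
move=> HD HD'; rewrite /omega /lf !big_map -big_split /=; apply: eq_bigr => k _.
by rewrite Dl_add // scalerDr (iED HRF) mulrDl.
Qed.

Lemma omega_scale a D : isDer D -> omega (der_scale a D) = iAF (g a) * omega D.
Proof.
move=> HD; rewrite /omega /lf !big_map mulr_sumr; apply: eq_bigr => k _.
by rewrite Dl_scale // scalerA mulrC -scalerA (iEZ HRF) mulrA.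
Qed.

Definition iAp (a : A) : TF := iAF (g a).
Definition iEp (x : E) : TF := iEF (G x).
Definition iDp (D : A -> A) : TF := iDF (tD D) + omega D.

Lemma genp : generator_maps homF iAp iEp iDp.
Proof.
rewrite /iAp /iEp /iDp.
split; first by move=> a b; rewrite gD (iAD HRF).
split; first by move=> a b; rewrite gM (iAM HRF).
split; first by rewrite g1 (iA1 HRF).
split; first by move=> a; apply: (homA HRF).
split; first by move=> x y; rewrite GD (iED HRF).
split; first by move=> a x; rewrite GZ (iEZ HRF).
split; first by move=> x; apply: (homE_gen HRF).
split.
  move=> D D' HD HD'; rewrite tD_add (iDD HRF (tDP HD) (tDP HD')) (omega_add HD HD').
  by rewrite addrACA.
split.
  move=> a D HD; rewrite tD_scale (iDZ HRF _ (tDP HD)) (omega_scale _ HD).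
  by rewrite mulrDr.
move=> D HD; apply: (homD HRF); first by apply: (homDD HRF); apply: tDP.
exact: (homLF HRF (omegaLF D)).
Qed.

Lemma phi_ex : exists phi : TE -> TF, ring_morph phi /\
  (forall a, phi (iAE a) = iAp a) /\ (forall x, phi (iEE x) = iEp x) /\
  (forall D, isDer D -> phi (iDE D) = iDp D).
Proof.
case: (freeT HRE (gcT HRF) genp) => phi [rm [pA [pE [pD _]]]].
by exists phi.
Qed.

Definition phi := sval (cid phi_ex).
Lemma phi_rm : ring_morph phi. Proof. exact: (svalP (cid phi_ex)).1. Qed.
Lemma phiA a : phi (iAE a) = iAF (g a). Proof. exact: (svalP (cid phi_ex)).2.1. Qed.
Lemma phiE x : phi (iEE x) = iEF (G x). Proof. exact: (svalP (cid phi_ex)).2.2.1. Qed.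
Lemma phiD D : isDer D -> phi (iDE D) = iDp D. Proof. exact: (svalP (cid phi_ex)).2.2.2. Qed.

Lemma phiDD x y : phi (x + y) = phi x + phi y. Proof. by case: phi_rm. Qed.
Lemma phiM x y : phi (x * y) = phi x * phi y. Proof. by case: phi_rm => _ []. Qed.
Lemma phi1 : phi 1 = 1. Proof. by case: phi_rm => _ []. Qed.
Lemma phi0 : phi 0 = 0.
Proof. by apply: (@addrI _ (phi 0)); rewrite -phiDD !addr0. Qed.
Lemma phiN x : phi (- x) = - phi x.
Proof. by apply/eqP; rewrite -addr_eq0 -phiDD addNr phi0. Qed.
Lemma phiB x y : phi (x - y) = phi x - phi y.
Proof. by rewrite phiDD phiN. Qed.
Lemma phi_sum I (r : seq I) (f : I -> TE) : phi (\sum_(i <- r) f i) = \sum_(i <- r) phi (f i).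
Proof. by elim: r => [|i r IH]; rewrite ?big_nil ?phi0 // !big_cons phiDD IH. Qed.
Lemma phiX x n : phi (x ^+ n) = phi x ^+ n.
Proof. by elim: n => [|n IH]; rewrite ?expr0 ?phi1 // !exprS phiM IH. Qed.
Lemma phi_sgn n x : phi ((-1) ^+ n * x) = (-1) ^+ n * phi x.
Proof. by rewrite phiM phiX phiN phi1. Qed.


Lemma phi_hom r t : homE r t -> homF r (phi t).
Proof.
move=> ht.
pose Good (r : nat) (t : TE) := homE r t /\ homF r (phi t).
have [s [hs et]] : exists s : seq (nat * TE), (forall p, p \in s -> Good p.1 p.2) /\ t = \sum_(p <- s) p.2.
  apply: (generation (gcT HRE) (gmT HRE) (freeT HRE) (Good := Good)).
  - by split; [apply: (hom1 HRE) | rewrite phi1; apply: (hom1 HRF)].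
  - by move=> r' t' [h1 h2]; split; [apply: (homN HRE) | rewrite phiN; apply: (homN HRF)].
  - move=> r1 s1 t1 u1 [h1 h2] [h3 h4]; split; first by apply: (homM HRE).
    by rewrite phiM; apply: (homM HRF).
  - by move=> a; split; [apply: (homA HRE) | rewrite phiA; apply: (homA HRF)].
  - by move=> x; split; [apply: (homE_gen HRE) | rewrite phiE; apply: (homE_gen HRF)].
  - move=> D HD; split; first by apply: (homDD HRE).
    by rewrite phiD //; case: genp => [_ [_ [_ [_ [_ [_ [_ [_ [_ H]]]]]]]]]; apply: H.
have e := decomp_hom HRE ht (fun p ps => (hs p ps).1) et.
rewrite e -big_filter phi_sum; apply: (hom_sum_seq HRF (P := xpredT)) => p.
by rewrite mem_filter => /andP [/eqP <- ps] _; exact: (hs p ps).2.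
Qed.

Definition Q x y := phi (brE x y) = brF (phi x) (phi y).

Lemma Q_anti r s x y : homE r x -> homE s y -> Q x y -> Q y x.
Proof.
move=> hx hy q; rewrite /Q (brC HRE hy hx) phiN phi_sgn q.
by rewrite (brC HRF (phi_hom hy) (phi_hom hx)).
Qed.

Lemma stepA r x : homE r x -> (forall a, Q x (iAE a)) -> (forall w, Q x (iEE w)) ->
  (forall D, isDer D -> Q x (iDE D)) -> forall z, Q x z.
Proof.
move=> hx qA qE qD z.
pose Good (s : nat) (y : TE) := [/\ homE s y, homF s (phi y) & Q x y].
have [l [hl ez]] : exists l : seq (nat * TE), (forall p, p \in l -> Good p.1 p.2) /\ z = \sum_(p <- l) p.2.
  apply: (generation (gcT HRE) (gmT HRE) (freeT HRE) (Good := Good)).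
  - split; [apply: (hom1 HRE) | rewrite phi1; apply: (hom1 HRF) |].
    by rewrite /Q (br1 HRE hx) phi0 phi1 (br1 HRF (phi_hom hx)).
  - move=> r' t' [h1 h2 h3]; split; [apply: (homN HRE) | rewrite phiN; apply: (homN HRF) |] => //.
    by rewrite /Q (brNr HRE) phiN h3 phiN (brNr HRF).
  - move=> r1 s1 t1 u1 [h1 h2 h3] [h4 h5 h6]; split; first by apply: (homM HRE).
      by rewrite phiM; apply: (homM HRF).
    rewrite /Q (brL HRE _ hx h1) phiDD phiM phi_sgn phiM h3 h6 phiM.
    by rewrite (brL HRF _ (phi_hom hx) h2).
  - move=> a; split; [apply: (homA HRE) | rewrite phiA; apply: (homA HRF) | exact: qA].
  - move=> w; split; [apply: (homE_gen HRE) | rewrite phiE; apply: (homE_gen HRF) | exact: qE].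
  - move=> D HD; split; [apply: (homDD HRE HD) | | exact: qD].
    by rewrite phiD //; case: genp => [_ [_ [_ [_ [_ [_ [_ [_ [_ H]]]]]]]]]; apply: H.
rewrite /Q ez (br_sumr HRE) !phi_sum (br_sumr HRF); apply: eq_big_seq => p ps.
by case: (hl p ps).
Qed.


Lemma homDp D : isDer D -> homF 2 (iDp D).
Proof. by move=> HD; case: genp => [_ [_ [_ [_ [_ [_ [_ [_ [_ H]]]]]]]]]; apply: H. Qed.

Lemma QAA a b : Q (iAE a) (iAE b).
Proof. by rewrite /Q (vAA HRE) phi0 !phiA (vAA HRF). Qed.
Lemma QAE a w : Q (iAE a) (iEE w).
Proof. by rewrite /Q (vAE HRE) phi0 phiA phiE (vAE HRF). Qed.
Lemma QEE w v : Q (iEE w) (iEE v).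
Proof. by rewrite /Q (vEE HRE) phiA !phiE (vEE HRF) Giso. Qed.
Lemma QDA D a : isDer D -> Q (iDE D) (iAE a).
Proof.
move=> HD; rewrite /Q (vDA HRE _ HD) phiN phiA phiD // phiA /iDp (brDl HRF).
by rewrite (vDA HRF _ (tDP HD)) /omega (br_A_lf HRF) addr0 /tD gK.
Qed.
Lemma Lg D w : isDer D -> brF (iDp D) (iEF (G w)) = - iEF (G (nablaE D w)).
Proof.
move=> HD; rewrite /iDp (brDl HRF) (vDE HRF _ (tDP HD)) (omega_contract _ HD) /Dl GK.
by rewrite (iEB HRF) addKr.
Qed.
Lemma QDE D w : isDer D -> Q (iDE D) (iEE w).
Proof. by move=> HD; rewrite /Q (vDE HRE _ HD) phiN !phiE phiD // Lg. Qed.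

Lemma QA a z : Q (iAE a) z.
Proof.
apply: (stepA (homA HRE a)); [exact: QAA | exact: QAE |].
move=> D HD; exact: (Q_anti (homDD HRE HD) (homA HRE a) (QDA a HD)).
Qed.
Lemma QE w z : Q (iEE w) z.
Proof.
apply: (stepA (homE_gen HRE w)); [| exact: QEE |].
  move=> a; exact: (Q_anti (homA HRE a) (homE_gen HRE w) (QAE a w)).
move=> D HD; exact: (Q_anti (homDD HRE HD) (homE_gen HRE w) (QDE w HD)).
Qed.

Lemma brJ22 (T : nzRingType) (A0 : comAlgType R) (EE : lmodType A0) ip nabla hom iA (iE : EE -> T) iD br
  (HR : is_rothstein_algebra ip nabla hom iA iE iD br) x y z :
  hom 2 x -> hom 2 y -> br (br x y) z = br x (br y z) - br y (br x z).
Proof. by move=> hx hy; rewrite (brJ HR z hx hy) sgn2 mul1r addrK. Qed.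

Lemma QDD D1 D2 : isDer D1 -> isDer D2 -> Q (iDE D1) (iDE D2).
Proof.
move=> HD1 HD2; rewrite /Q !phiD //.
set X := phi _; set Y := brF _ _.
have hl := der_lieP HD1 HD2.
case: (vDD HRE HD1 HD2) => s [_ es].
have eX : X = - iDF (der_lie (tD D1) (tD D2)) +
     (- omega (der_lie D1 D2) - lf iEF [seq (G q.1, G q.2) | q <- s]).
  rewrite /X es phiB phiN phiD // /iDp tD_lie /lf phi_sum big_map.
  rewrite opprD addrA; congr (_ - _); apply: eq_bigr => q _.
  by rewrite phiM !phiE.
have hV1 : isLF iEF (- omega (der_lie D1 D2) - lf iEF [seq (G q.1, G q.2) | q <- s]).
  apply: (isLFB HRF); first by apply: (isLFN HRF); apply: omegaLF.
  by exists [seq (G q.1, G q.2) | q <- s].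
case: (br_DW HRF HipF (tDP HD1) (tDP HD2) (omegaLF D1) (omegaLF D2)) => V2 [hV2 eY].
have [s' es'] : isLF iEF (X - Y).
  rewrite eX /Y /iDp eY opprD addrACA subrr add0r.
  exact: (isLFB HRF).
have hW := (brdeg HRE (homDD HRE HD1) (homDD HRE HD2)).1.
have zero : forall y, brF (lf iEF s') (iEF y) = 0.
  move=> y; rewrite -es' (brBl HRF) -(GiK y); set x := Gi y.
  have qW := Q_anti (homE_gen HRE x) hW (QE x (brE (iDE D1) (iDE D2))).
  rewrite /X -phiE -qW (brJ22 HRE _ (homDD HRE HD1) (homDD HRE HD2)).
  rewrite !(vDE HRE) // !(brNr HRE) !(vDE HRE) // !opprK phiB !phiE.
  rewrite /Y (brJ22 HRF _ (homDp HD1) (homDp HD2)) !Lg // !(brNr HRF) !Lg //.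
  by rewrite !opprK subrr.
have := lf_zero HRF HipF fr2 hh2 zero; rewrite -es' => /eqP.
by rewrite subr_eq0 => /eqP.
Qed.

Lemma QD D z : isDer D -> Q (iDE D) z.
Proof.
move=> HD; apply: (stepA (homDD HRE HD)).
- by move=> a; apply: QDA.
- by move=> w; apply: QDE.
- by move=> D' HD'; apply: QDD.
Qed.

Lemma Qall x y : Q x y.
Proof.
have [l [hl ex]] : exists l : seq (nat * TE), (forall p, p \in l -> homE p.1 p.2) /\ x = \sum_(p <- l) p.2.
  apply: (generation (gcT HRE) (gmT HRE) (freeT HRE) (Good := homE)).
  - exact: (hom1 HRE).
  - by move=> *; apply: (homN HRE).
  - by move=> *; apply: (homM HRE).
  - exact: (homA HRE).
  - exact: (homE_gen HRE).
  - exact: (homDD HRE).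
rewrite /Q ex (br_suml HRE) !phi_sum (br_suml HRF); apply: eq_big_seq => p ps.
have hp := hl p ps.
apply: (stepA hp).
- move=> a; exact: (Q_anti (homA HRE a) hp (QA a p.2)).
- move=> w; exact: (Q_anti (homE_gen HRE w) hp (QE w p.2)).
- move=> D HD; exact: (Q_anti (homDD HRE HD) hp (QD p.2 HD)).
Qed.

Lemma main_exists : exists Gs : TE -> TF,
    poisson_morphism homE homF brE brF Gs /\
    (forall a, Gs (iAE a) = iAF (g a)) /\
    (forall x, Gs (iEE x) = iEF (G x)).
Proof.
exists phi; split; last by split; [exact: phiA | exact: phiE].
split; first exact: phi_rm.
split; first by move=> r x; apply: phi_hom.
exact: Qall.
Qed.

End Main.

Theorem mainTheorem15
  (R : comNzRingType)
  (hQ : forall n : nat, exists u : R, u * (n.+1)%:R = 1)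
  (A B : comAlgType R) (E : lmodType A) (F : lmodType B)
  (ipE : E -> E -> A) (ipF : F -> F -> B)
  (nablaE : (A -> A) -> E -> E) (nablaF : (B -> B) -> F -> F)
  (TE TF : nzRingType)
  (homE : nat -> TE -> Prop) (homF : nat -> TF -> Prop)
  (iAE : A -> TE) (iEE : E -> TE) (iDE : (A -> A) -> TE) (brE : TE -> TE -> TE)
  (iAF : B -> TF) (iEF : F -> TF) (iDF : (B -> B) -> TF) (brF : TF -> TF -> TF)
  (g : A -> B) (G : E -> F) :
  fg_projective E -> fg_projective F ->
  good_inner_product ipE -> good_inner_product ipF ->
  metric_connection ipE nablaE -> metric_connection ipF nablaF ->
  is_rothstein_algebra ipE nablaE homE iAE iEE iDE brE ->
  is_rothstein_algebra ipF nablaF homF iAF iEF iDF brF ->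
  (* g : A -> B is an isomorphism of R-algebras *)
  (forall a b, g (a + b) = g a + g b) ->
  (forall a b, g (a * b) = g a * g b) ->
  g 1 = 1 ->
  (forall (r : R) a, g (r *: a) = r *: g a) ->
  bijective g ->
  (* G : E -> F is an R-linear bijection along g, isometric *)
  (forall x y, G (x + y) = G x + G y) ->
  (forall (r : R) x, G (r%:A *: x) = r%:A *: G x) ->
  (forall (a : A) x, G (a *: x) = g a *: G x) ->
  bijective G ->
  (forall x y, g (ipE x y) = ipF (G x) (G y)) ->
  exists Gs : TE -> TF,
    poisson_morphism homE homF brE brF Gs /\
    (forall a, Gs (iAE a) = iAF (g a)) /\
    (forall x, Gs (iEE x) = iEF (G x)).
Proof.
intros; eapply main_exists; eassumption.
Qed.
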